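(* With $k(c)$ as defined below, $k(c)\sim \dfrac{\log |c+2|^{-1}}{\log 4}$ as $c\to -2$, $c<-2$ (i.e. the ratio of the two sides tends to $1$).
   Context: For real $c<-2$ let $f_c(z)=z^2+c$ and $r_n(c)=f_c^{\circ n}(0)$, so $r_1(c)=c$ and $r_{n+1}(c)=r_n(c)^2+c$. For $-3<c<-2$, $k(c)$ denotes the smallest positive integer $k$ such that $r_{k+1}(c)/r_k(c)\ge 36$. *)

(* Defs.v *)
From Stdlib Require Import Reals Lra Lia.
Open Scope R_scope.

Fixpoint r (n : nat) (c : R) : R :=
  match n with
  | O => 0
  | S m => (r m c) ^ 2 + c
  end.

Definition is_k (c : R) (k : nat) : Prop :=
  (1 <= k)%nat /\ r (S k) c / r k c >= 36 /\
  (forall j : nat, (1 <= j < k)%nat -> r (S j) c / r j c < 36).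

(* Main.v *)
Require Import Defs.
From Stdlib Require Import Reals Lra Lia Psatz Classical.
Open Scope R_scope.

Lemma r_S n c : r (S n) c = r n c ^ 2 + c.
Proof. reflexivity. Qed.

Lemma r1 c : r 1 c = c.
Proof. simpl; ring. Qed.

Lemma r2 c : r 2 c = c ^ 2 + c.
Proof. rewrite r_S, r1. ring. Qed.

Lemma lowerL c m : c < -2 ->
  r (S (S m)) c - 2 - (-2 - c) / 3 >= (8/3) * (-2 - c) * 4 ^ m.
Proof.
  intros Hc. induction m as [|m IH].
  - rewrite r2. simpl. nra.
  - rewrite r_S. set (d := r (S (S m)) c - 2) in *.
    replace (r (S (S m)) c) with (d + 2) by (unfold d; ring).
    simpl pow in *. nra.
Qed.

Lemma lowerL' c m : c < -2 -> r (S (S m)) c >= 2 + (-2 - c) * 4 ^ m.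
Proof.
  intros Hc. pose proof (lowerL c m Hc). pose proof (pow_le 4 m ltac:(lra)).
  nra.
Qed.

Lemma step_up d e X : 0 <= d -> 0 <= e -> 0 <= d^2+4*d-e -> d <= X*(1+d) ->
  d^2+4*d-e <= 4*X*(1+(d^2+4*d-e)).
Proof.
  intros H0 He H1 H2. set (d' := d^2+4*d-e) in *.
  assert (Hd' : d' <= d^2 + 4*d) by (unfold d'; lra).
  assert (A : d' * (1+d) <= 4*d*(1+d')).
  { destruct (Rle_lt_dec d (1/3)).
    - assert (d' * (1 - 3*d) <= (d^2+4*d)*(1-3*d)) by nra. nra.
    - nra. }
  assert (B : 4*d*(1+d') <= 4*X*(1+d)*(1+d')) by nra.
  apply (Rmult_le_reg_r (1+d)); [lra|]. nra.
Qed.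

Lemma upperL c m : -3 < c < -2 ->
  r (S (S m)) c - 2 <= 4 * (-2 - c) * 4 ^ m * (1 + (r (S (S m)) c - 2)).
Proof.
  intros Hc. induction m as [|m IH].
  - rewrite r2. simpl.
    assert (0 <= (-2-c)^2*(1+(-2-c)*(3+(-2-c)))) by (apply Rmult_le_pos; nra).
    nra.
  - pose proof (lowerL' c m ltac:(lra)) as L0.
    pose proof (lowerL' c (S m) ltac:(lra)) as L1.
    pose proof (pow_le 4 m ltac:(lra)).
    pose proof (pow_le 4 (S m) ltac:(lra)).
    rewrite (r_S (S (S m))) in L1 |- *.
    assert (Ed : r (S (S m)) c = (r (S (S m)) c - 2) + 2) by ring.
    set (d := r (S (S m)) c - 2) in *. rewrite Ed in L1 |- *.
    replace ((d+2)^2 + c - 2) with (d^2+4*d-(-2-c)) in * by ring.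
    assert (0 <= d) by nra.
    replace (4 * (-2 - c) * 4 ^ S m) with (4 * (4 * (-2-c) * 4^m)) by (simpl; ring).
    apply step_up; nra.
Qed.

Lemma pow4_ge m : INR m <= 4 ^ m.
Proof.
  induction m as [|m IH]; [simpl; lra|].
  rewrite S_INR. replace (4 ^ S m) with (4 * 4 ^ m) by (simpl; ring).
  pose proof (pow_R1_Rle 4 m ltac:(lra)). lra.
Qed.

Lemma least (P : nat -> Prop) : forall N n, (n <= N)%nat -> P n ->
  exists k, P k /\ forall j, (j < k)%nat -> ~ P j.
Proof.
  induction N as [|N IH]; intros n Hn Pn.
  - exists n. split; [auto| intros j Hj; lia].
  - destruct (classic (exists j, (j < n)%nat /\ P j)) as [[j [Hj Pj]]|Hno].
    + apply (IH j); [lia|auto].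
    + exists n. split; auto. intros j Hj Pj. apply Hno. eauto.
Qed.

Lemma ratio_eq x c : x <> 0 -> (x^2 + c)/x * x = x^2 + c.
Proof. intros; field; auto. Qed.

Theorem lemma1 :
  (forall c : R, -3 < c < -2 -> exists k : nat, is_k c k) /\
  (forall eps : R, eps > 0 ->
     exists delta : R, delta > 0 /\
       forall (c : R) (k : nat),
         -3 < c < -2 -> -2 - delta < c ->
         is_k c k ->
         Rabs (INR k / (ln (/ Rabs (c + 2)) / ln 4) - 1) < eps).
Proof.
  split.
  - intros c Hc.
    destruct (archimed_cor1 ((-2 - c)/38) ltac:(lra)) as [N [HN HN0]].
    assert (HNp : 0 < INR N) by (apply lt_0_INR; lia).
    assert (HeN : (-2-c) * INR N > 38).
    { assert (/ INR N * INR N = 1) by (field; lra). nra. }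
    pose proof (pow4_ge N).
    pose proof (lowerL' c N ltac:(lra)) as L.
    set (x := r (S (S N)) c) in *.
    assert (Hx : x > 40) by nra.
    assert (Hrat : r (S (S (S N))) c / r (S (S N)) c >= 36).
    { rewrite r_S. fold x. apply Rle_ge. apply (Rmult_le_reg_r x); [lra|].
      rewrite ratio_eq by lra. nra. }
    assert (H1N : (1 <= S (S N))%nat) by lia.
    destruct (least (fun j => (1 <= j)%nat /\ r (S j) c / r j c >= 36)
                (S (S N)) (S (S N)) (le_n _) (conj H1N Hrat))
      as [k [[Hk1 Hk2] Hmin]].
    exists k. split; [auto|split; [auto|]].
    intros j Hj. apply Rnot_ge_lt. intro Hge. apply (Hmin j); [lia|split; [lia|auto]].
  - intros eps Heps.
    assert (Ha : 0 < ln 4).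
    { rewrite <- ln_1. apply ln_increasing; lra. }
    set (a := ln 4) in *.
    exists (exp (- (6 * a / eps))). split; [apply Rlt_gt, exp_pos|].
    intros c k Hc Hd [Hk1 [Hk2 Hk3]].
    set (e := -2 - c).
    assert (He : 0 < e) by (unfold e; lra).
    assert (Hlne : ln e < - (6 * a / eps)).
    { rewrite <- (ln_exp (- (6 * a / eps))). apply ln_increasing; unfold e; lra. }
    assert (Habs : Rabs (c + 2) = e) by (rewrite Rabs_left by lra; unfold e; ring).
    rewrite Habs, ln_Rinv by lra.
    assert (Hlow : 1 < e * 4 ^ k).
    { destruct k as [|[|m]]; [lia| |].
      - exfalso. rewrite r2, r1 in Hk2.
        replace ((c^2+c)/c) with (c+1) in Hk2 by (field; lra). lra.
      - pose proof (lowerL' c m ltac:(lra)) as L.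
        pose proof (upperL c m Hc) as U.
        pose proof (pow_le 4 m ltac:(lra)).
        rewrite r_S in Hk2. set (x := r (S (S m)) c) in *.
        assert (Hx0 : x > 0) by nra.
        assert (Hx : x^2 + c >= 36 * x).
        { rewrite <- (ratio_eq x c) by lra. nra. }
        assert (x >= 36) by nra.
        fold e in L, U.
        replace (4 ^ S (S m)) with (16 * 4^m) by (simpl; ring).
        nra. }
    assert (Hup : e * 4 ^ k < 4 ^ 6).
    { destruct k as [|[|[|m]]]; [lia| unfold e; simpl; lra | unfold e; simpl; lra |].
      pose proof (Hk3 (S (S m)) ltac:(lia)) as Hr.
      pose proof (lowerL' c m ltac:(lra)) as L.
      pose proof (pow_le 4 m ltac:(lra)).
      rewrite r_S in Hr. set (x := r (S (S m)) c) in *.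
      assert (Hx0 : x > 0) by nra.
      assert (Hx : x^2 + c < 36 * x).
      { rewrite <- (ratio_eq x c) by lra. nra. }
      assert (x < 37) by nra.
      fold e in L.
      replace (4 ^ S (S (S m))) with (64 * 4^m) by (simpl; ring).
      simpl; nra. }
    assert (Hp : 0 < 4 ^ k) by (apply pow_lt; lra).
    assert (H1 : 0 < ln e + INR k * a).
    { unfold a. rewrite <- ln_pow by lra. rewrite <- ln_mult by lra.
      rewrite <- ln_1. apply ln_increasing; lra. }
    assert (H2 : ln e + INR k * a < 6 * a).
    { unfold a. rewrite <- ln_pow by lra. rewrite <- ln_mult by lra.
      replace 6 with (INR 6) by (simpl; ring). rewrite <- ln_pow by lra.
      apply ln_increasing; nra. }
    set (u := - ln e).
    assert (Hu : u * eps > 6 * a).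
    { unfold u. assert (6 * a / eps * eps = 6 * a) by (field; lra). nra. }
    assert (Hu0 : u > 0).
    { unfold u. assert (0 < 6 * a / eps) by (apply Rdiv_lt_0_compat; lra). lra. }
    replace (INR k / (u / a) - 1) with ((INR k * a - u) / u) by (field; lra).
    set (q := (INR k * a - u) / u).
    assert (Hq : q * u = INR k * a - u) by (unfold q; field; lra).
    assert (Hlu : ln e = - u) by (unfold u; ring).
    rewrite Hlu in H1, H2.
    assert (Hq1 : q * u < eps * u) by lra.
    assert (Hq2 : 0 < q * u) by lra.
    apply Rabs_def1.
    + apply (Rmult_lt_reg_r u); [lra|]. lra.
    + assert (0 < q).
      { apply (Rmult_lt_reg_r u); lra. }
      lra.
Qed.
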